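(* Let $p,b$ be distinct primes and $a,c$ positive integers such that $c$ is a primitive divisor of $p^a-1$. If $b\mid p^a-1$ and $b\nmid\tfrac{p^a-1}{c}$, then $$g\Big(\tfrac{p^{ab}-1}{bc},\,p^{ab}\Big)=b\,g\Big(\tfrac{p^a-1}{c},\,p^a\Big).$$
   Context: For a prime power $q$ and a positive integer $k$, the Waring number $g(k,q)$ is the smallest $s$ (if it exists) such that every element of $\mathbb{F}_q$ is a sum of $s$ $k$-th powers of elements of $\mathbb{F}_q$. An integer $e$ is a primitive divisor of $p^a-1$ if $e\mid p^a-1$ and $e\nmid p^t-1$ for every $1\le t<a$. *)

(* Defs.v *)
From HB Require Import structures.
From mathcomp Require Import all_boot all_order all_algebra all_field.
Set Implicit Arguments. Unset Strict Implicit. Unset Printing Implicit Defensive.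
Import GRing.Theory.

Definition primitive_divisor (e p a : nat) : Prop :=
  (e %| p ^ a - 1)%N /\ forall t : nat, (1 <= t)%N -> (t < a)%N -> ~~ (e %| p ^ t - 1)%N.

Definition waring_sum (F : finFieldType) (k s : nat) : Prop :=
  forall x : F, exists xs : s.-tuple F, x = (\sum_(i < s) (tnth xs i) ^+ k)%R.

Definition is_waring_number (F : finFieldType) (k g : nat) : Prop :=
  waring_sum F k g /\ forall s, waring_sum F k s -> (g <= s)%N.

(* Main.v *)
Require Import Defs.
From HB Require Import structures.
From mathcomp Require Import all_boot all_order all_algebra all_field all_fingroup all_solvable.
Set Implicit Arguments. Unset Strict Implicit. Unset Printing Implicit Defensive.
Import GRing.Theory.
From Stdlib Require Import ClassicalEpsilon Classical.

Section Sumk.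
Local Open Scope ring_scope.
Variable F : nzRingType.
Variable k : nat.

Definition sumk (n : nat) (x : F) :=
  exists xs : n.-tuple F, x = \sum_(i < n) tnth xs i ^+ k.

Lemma sumk0 : sumk 0 0.
Proof. by exists [tuple]; rewrite big_ord0. Qed.

Lemma sumk1 y : sumk 1 (y ^+ k).
Proof. by exists [tuple y]; rewrite big_ord1. Qed.

Lemma sumkD m n x y : sumk m x -> sumk n y -> sumk (m + n) (x + y).
Proof.
move=> [xs ->] [ys ->]; exists [tuple of xs ++ ys].
by rewrite big_split_ord /=; congr (_ + _); apply: eq_bigr => i _;
  rewrite ?tnth_lshift ?tnth_rshift.
Qed.

Lemma sumk_big (I : Type) (r : seq I) (P : pred I) (n : I -> nat) (f : I -> F) :
  (forall i, P i -> sumk (n i) (f i)) ->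
  sumk (\sum_(i <- r | P i) n i)%N (\sum_(i <- r | P i) f i).
Proof.
move=> H; apply: (big_ind2 (fun m x => sumk m x)) => //.
  exact: sumk0.
by move=> ? ? ? ?; apply: sumkD.
Qed.

Lemma sumk_pad m n x : (0 < k)%N -> (m <= n)%N -> sumk m x -> sumk n x.
Proof.
move=> k0 le sx; rewrite -(subnKC le) -[x]addr0; apply: sumkD => //.
have -> : (0 : F) = \sum_(i < n - m) 0 ^+ k by rewrite big1 // => i _; rewrite expr0n eqn0Ngt k0.
rewrite -[X in sumk X _](card_ord (n - m)) -sum1_card.
by apply: sumk_big => i _; apply: sumk1.
Qed.

End Sumk.
Local Open Scope ring_scope.

Lemma prim_root_exists (F : finFieldType) : exists w : F, (#|F|.-1).-primitive_root w.
Proof.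
have F1 := finNzRing_gt1 F.
have : has (#|F|.-1).-primitive_root [seq x <- enum F | x != 0].
  apply: has_prim_root.
  - by rewrite -ltnS (ltn_predK F1).
  - apply/allP => x; rewrite mem_filter => /andP[nz _].
    apply/unity_rootP; apply: (mulfI nz); rewrite -exprS (ltn_predK F1) expf_card mulr1 //.
  - by rewrite filter_uniq // enum_uniq.
  - suff -> : size [seq x <- enum F | x != 0] = #|F|.-1 by [].
    rewrite -(cardC1 (0:F)) cardE; unfold enum_mem; congr size.
    by rewrite -filter_predI; apply: eq_filter => x /=; rewrite !inE andbT.
by case/hasP => w _ Hw; exists w.
Qed.

Lemma frobD (F : comNzRingType) (p e : nat) (x y : F) : p \in [pchar F] ->
  (x + y) ^+ (p ^ e) = x ^+ (p ^ e) + y ^+ (p ^ e).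
Proof.
move=> pF; apply: exprDn_pchar.
rewrite (eq_pnat _ (pcharf_eq pF)) pnatX pnat_id ?orbT //.
exact: pcharf_prime pF.
Qed.

Lemma vdm (F : fieldType) (n r : nat) (e : 'I_n -> F) (y : F) :
  (0 < r)%N -> (forall x z : F, (x + z) ^+ r = x ^+ r + z ^+ r) ->
  (forall i, e i ^+ r = e i) ->
  uniq [seq iter j (fun x => x ^+ r) y | j <- iota 0 n] ->
  \sum_(i < n) e i * y ^+ i = 0 -> forall i, e i = 0.
Proof.
move=> r0 hD he hu h0.
pose E j := if insub j is Some i then e i else 0.
have EE (i : 'I_n) : E i = e i by rewrite /E valK.
pose f := \poly_(j < n) E j.
have fE x : f.[x] = \sum_(i < n) e i * x ^+ i.
  by rewrite horner_poly; apply: eq_bigr => i _; rewrite EE.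
have fr x : f.[x] ^+ r = f.[x ^+ r].
  rewrite !fE (big_morph (fun z => z ^+ r) hD (expr0n _ _)); last first.
  rewrite eqn0Ngt r0 //.
  by apply: eq_bigr => i _; rewrite exprMn he exprAC.
have roots : all (root f) [seq iter j (fun x => x ^+ r) y | j <- iota 0 n].
  apply/allP => z /mapP[j _ ->]; rewrite /root; elim: j => [|j IH] /=.
    by rewrite fE h0.
  by rewrite -fr (eqP IH) expr0n eqn0Ngt r0.
have f0 : f = 0.
  apply: contraTeq hu => nf; apply/negP => hu.
  have := max_poly_roots nf roots hu; rewrite size_map size_iota.
  by rewrite ltnNge size_poly.
move=> i; rewrite -EE.
have := congr1 (fun g : {poly F} => g`_i) f0; rewrite coef_poly ltn_ord coef0.
done.
Qed.
Section Fp2.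
Variables (p : nat) (F : nzRingType) (pF : p \in [pchar F]).

Definition Fp2 (x : 'F_p) : F := (nat_of_ord x)%:R.

Lemma Fp2_nat n : Fp2 (n%:R) = n%:R.
Proof. by rewrite /Fp2 val_Fp_nat ?(pcharf_prime pF) // (GRing.natr_mod_pchar pF). Qed.

Lemma Fp2D x y : Fp2 (x + y) = Fp2 x + Fp2 y.
Proof. by rewrite -[x]natr_Zp -[y]natr_Zp -natrD !Fp2_nat natrD. Qed.

Lemma Fp2_zmod : zmod_morphism Fp2.
Proof.
move=> x y; have := Fp2D (x - y) y; rewrite subrK => ->; by rewrite addrK.
Qed.

Lemma Fp2_monoid : monoid_morphism Fp2.
Proof.
split; first by rewrite -[1]/(1%:R) Fp2_nat.
by move=> x y; rewrite -[x]natr_Zp -[y]natr_Zp -natrM !Fp2_nat natrM.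
Qed.

Definition Fp2RM : {rmorphism 'F_p -> F} :=
  HB.pack Fp2 (GRing.isZmodMorphism.Build _ _ _ Fp2_zmod)
              (GRing.isMonoidMorphism.Build _ _ _ Fp2_monoid).
End Fp2.

Lemma embed (p : nat) (F2 F1 : finFieldType) :
  p \in [pchar F2] -> p \in [pchar F1] -> (forall x : F2, x ^+ #|F1| = x) ->
  exists phi : {rmorphism F2 -> F1}, True.
Proof.
move=> pF2 pF1 Hc.
have [w pw] := prim_root_exists F2.
pose i2 := Fp2RM pF2; pose i1 := Fp2RM pF1.
pose ev2 : {rmorphism {poly 'F_p} -> F2} := horner_morph (fun a => mulrC w (i2 a)).
have ev2X : ev2 'X = w by apply: horner_morphX.
have surj x : exists f, ev2 f = x.
  have [->|nx] := eqVneq x 0; first by exists 0; rewrite rmorph0.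
  have F21 := finNzRing_gt1 F2.
  have : x ^+ (#|F2|.-1) = 1.
    apply: (mulfI nx); rewrite -exprS (ltn_predK F21) expf_card mulr1 //.
  case/(prim_rootP pw) => i ->; exists ('X^i).
  by rewrite rmorphXn ev2X.
pose G : {poly 'F_p} := 'X^#|F1| - 'X.
have G0 : G != 0.
  by rewrite -size_poly_eq0 size_polyDl ?size_polyXn // size_polyN size_polyX ltnS (finNzRing_gt1 F1).
have evG : ev2 G = 0 by rewrite rmorphB rmorphXn ev2X Hc subrr.
pose Pn (n : nat) := if excluded_middle_informative (exists f : {poly 'F_p}, [/\ f != 0, size f = n & ev2 f = 0]) then true else false.
have exPn : exists n, Pn n.
  exists (size G); rewrite /Pn; case: excluded_middle_informative => // [[]].
  by exists G.
case: (ex_minnP exPn) => n Pn_n minn.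
move: Pn_n; rewrite /Pn; case: excluded_middle_informative => // [[P [P0 sP evP]]] _.
have dvdP f : ev2 f = 0 -> P %| f.
  move=> evf; apply/modp_eq0P; apply: contraTeq isT => nm.
  have : (n <= size (f %% P)%R)%N.
    apply: minn; rewrite /Pn; case: excluded_middle_informative => // [[]].
    exists (f %% P)%R; split => //.
    by have := congr1 ev2 (divp_eq f P); rewrite rmorphD rmorphM /= evP mulr0 add0r evf => <-.
  by rewrite leqNgt -sP ltn_modp P0.
pose ev1h (h : F1) : {rmorphism {poly 'F_p} -> F1} := horner_morph (fun a => mulrC h (i1 a)).
have [h rh] : exists h : F1, ev1h h P = 0.
  have := dvdP G evG; have mX : poly_map_poly__canonical__GRing_RMorphism i1 'X = 'X := map_polyX i1.
  rewrite -(dvdp_map i1) /G rmorphB rmorphXn mX.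
  rewrite finField_genPoly => /dvdp_prod_XsubC [m Hm].
  case E: (mask m (index_enum F1)) Hm => [|h s] Hm.
    rewrite big_nil in Hm; have := eqp_size Hm; rewrite size_poly1 size_map_poly.
    move/eqP/size_poly1P => [c c0 Pc].
    move: evP; rewrite Pc; have -> : ev2 c%:P = i2 c by apply: horner_morphC.
    by move/eqP; rewrite fmorph_eq0 (negPf c0).
  exists h; have := eqp_root Hm h; rewrite root_prod_XsubC mem_head => /rootP rQ.
  exact: rQ.
pose ev1 := ev1h h.
have ker f : ev2 f = 0 -> ev1 f = 0.
  by move/dvdP; case/dvdpP => r ->; rewrite rmorphM /= rh mulr0.
have surjb x : exists f, ev2 f == x by have [f <-] := surj x; exists f.
pose phi x := ev1 (xchoose (surjb x)).
have phiE f : phi (ev2 f) = ev1 f.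
  rewrite /phi; have := xchooseP (surjb (ev2 f)); set g := xchoose _ => /eqP eg.
  apply/eqP; rewrite -subr_eq0 -rmorphB; apply/eqP/ker; by rewrite rmorphB eg subrr.
have phiD : zmod_morphism phi.
  move=> x y; have [fx <-] := surj x; have [fy <-] := surj y.
  by rewrite -rmorphB !phiE rmorphB.
have phiM : monoid_morphism phi.
  split; first by rewrite -(rmorph1 ev2) phiE rmorph1.
  move=> x y; have [fx <-] := surj x; have [fy <-] := surj y.
  by rewrite -rmorphM !phiE rmorphM.
pose phiRM : {rmorphism F2 -> F1} := HB.pack phi
  (GRing.isZmodMorphism.Build _ _ _ phiD) (GRing.isMonoidMorphism.Build _ _ _ phiM).
by exists phiRM.
Qed.
Local Close Scope ring_scope.
Lemma inj_onto (T T' : finType) (f : T -> T') :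
  injective f -> (#|T'| <= #|T|)%N -> forall y, exists x, y = f x.
Proof. by move=> fi cr y; have /codomP := inj_card_onto fi cr y. Qed.

Section NatFacts.
Variables (p b a c : nat).
Hypotheses (pp : prime p) (pb : prime b) (a0 : (0 < a)%N) (c0 : (0 < c)%N)
  (pd : primitive_divisor c p a) (bdiv : (b %| p ^ a - 1)%N)
  (bndiv : ~~ (b %| (p ^ a - 1) %/ c)%N).

Lemma q_gt1 : (1 < p ^ a)%N.
Proof. by rewrite -(expn0 p) ltn_exp2l ?prime_gt1. Qed.

Lemma cdiv : (c %| p ^ a - 1)%N. Proof. by case: pd. Qed.

Lemma k_eq : (p ^ a - 1 = (p ^ a - 1) %/ c * c)%N.
Proof. by rewrite divnK // cdiv. Qed.

Lemma k_gt0 : (0 < (p ^ a - 1) %/ c)%N.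
Proof.
rewrite divn_gt0 // dvdn_leq // ?cdiv //.
by rewrite subn_gt0 q_gt1.
Qed.

Lemma K_eq : (p ^ (a * b) - 1 = (p ^ (a * b) - 1) %/ (b * c) * (b * c))%N.
Proof.
rewrite divnK //.
rewrite expnM !subn1 predn_exp.
have hb : (b %| \sum_(i < b) (p ^ a) ^ i)%N.
  have -> : (\sum_(i < b) (p ^ a) ^ i = \sum_(i < b) ((p ^ a) ^ i).-1 + b)%N.
    rewrite -[X in (_ = _ + X)%N](card_ord b) -sum1_card -big_split /=.
    apply: eq_bigr => i _; by rewrite addn1 prednK // expn_gt0 ltnW // q_gt1.
  rewrite dvdn_addl //; apply: dvdn_sum => i _; rewrite predn_exp.
  by apply: dvdn_mulr; rewrite -subn1.
rewrite mulnC; apply: dvdn_mul => //; by rewrite -subn1 cdiv.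
Qed.

Lemma K_gt0 : (0 < (p ^ (a * b) - 1) %/ (b * c))%N.
Proof.
have : (0 < p ^ (a * b) - 1)%N.
  by rewrite subn_gt0 -(expn0 p) ltn_exp2l ?prime_gt1 // muln_gt0 a0 prime_gt0.
by rewrite {1}K_eq muln_gt0 => /andP[].
Qed.

Lemma coprime_cp : coprime c p.
Proof.
rewrite coprime_sym prime_coprime //; apply/negP => pc.
have h1 : (p %| p ^ a - 1)%N by apply: dvdn_trans pc cdiv.
have h2 : (p %| p ^ a)%N by rewrite dvdn_exp.
have := dvdn_sub h2 h1; rewrite subKn ?(ltnW q_gt1) // dvdn1 => /eqP p1.
by move: pp; rewrite p1.
Qed.

Lemma gcd_qc : gcdn (p ^ a - 1) (b * c) = c.
Proof.
rewrite {1}k_eq -muln_gcdl.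
have -> : gcdn ((p ^ a - 1) %/ c) b = 1%N.
  by rewrite gcdnC; apply/eqP; rewrite -/(coprime _ _) prime_coprime.
by rewrite mul1n.
Qed.

Lemma pow_inj i j : (i < a)%N -> (j < a)%N -> p ^ i = p ^ j %[mod c] -> i = j.
Proof.
wlog le : i j / (i <= j)%N.
  move=> H ia ja e; case: (leqP i j) => [l|l]; first exact: H.
  by apply/esym/H => //; apply: ltnW.
move=> ia ja /eqP e; apply/eqP; rewrite eqn_leq le /=; apply/negP => lt.
have : (c %| p ^ j - p ^ i)%N by rewrite -eqn_mod_dvd ?leq_pexp2l ?prime_gt0 // eq_sym.
rewrite -(subnKC le) expnD -{2}(muln1 (p ^ i)) -mulnBr Gauss_dvdr.
  apply/negP; case: pd => _; apply; rewrite ?subn_gt0 //.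
    by rewrite ltnNge; apply/negP.
  exact: leq_ltn_trans (leq_subr i j) ja.
by apply: coprimeXr; apply: coprime_cp.
Qed.

End NatFacts.

Local Open Scope ring_scope.

Lemma natr_inj_lt (F : nzRingType) p (pF : p \in [pchar F]) (m n : nat) :
  (m < p)%N -> (n < p)%N -> m%:R = n%:R :> F -> m = n.
Proof.
wlog le : m n / (m <= n)%N.
  move=> H mp np e; case: (leqP m n) => [l|l]; first exact: H.
  by apply/esym/H => //; apply: ltnW.
move=> mp np e; apply/eqP; rewrite eqn_leq le /=.
have : (p %| n - m)%N by rewrite (dvdn_pcharf pF) natrB // e subrr.
case: (posnP (n - m)) => [/eqP|pos]; first by rewrite subn_eq0.
by move/(dvdn_leq pos); rewrite leqNgt (leq_ltn_trans (leq_subr m n) np).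
Qed.

Lemma iter_pow (F : nzRingType) r j (y : F) : iter j (fun x => x ^+ r) y = y ^+ (r ^ j)%N.
Proof. by elim: j => [|j IH] /=; rewrite ?expr1 // IH expnSr exprM. Qed.

Lemma waring_exists (p a c : nat) (F2 : finFieldType) : prime p -> (0 < a)%N -> (0 < c)%N ->
  primitive_divisor c p a -> #|F2| = (p ^ a)%N -> exists s, waring_sum F2 ((p ^ a - 1) %/ c)%N s.
Proof.
move=> pp a0 c0 pd cF2.
have pF2 : p \in [pchar F2] := card_finPcharP cF2 pp.
have [w pw] := prim_root_exists F2.
rewrite cF2 -subn1 in pw.
set k := ((p ^ a - 1) %/ c)%N.
have pv : c.-primitive_root (w ^+ k) := dvdn_prim_root pw (cdiv pd).
set v := w ^+ k in pv.
pose Psi (t : {ffun 'I_a -> 'I_p}) : F2 := (\sum_(i < a) (t i : nat)%:R * v ^+ i)%R.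
have Psi_inj : injective Psi.
  move=> t t' e; apply/ffunP => i; apply: val_inj.
  apply: (natr_inj_lt pF2 (ltn_ord _) (ltn_ord _)).
  apply/eqP; rewrite -GRing.subr_eq0; apply/eqP; move: i.
  apply: (vdm (r := p) (y := v)).
  - exact: prime_gt0.
  - by move=> x y; have := frobD 1 x y pF2; rewrite expn1.
  - move=> i; rewrite -(pFrobenius_autE pF2) pFrobenius_autB_comm ?pFrobenius_aut_nat //.
    exact: mulrC.
  - rewrite map_inj_in_uniq ?iota_uniq // => i j; rewrite !mem_iota /= !add0n => ia ja.
    rewrite !iter_pow => /eqP; rewrite (eq_prim_root_expr pv) => /eqP.
    exact: (pow_inj pp a0 pd ia ja).
  - rewrite (eq_bigr (fun i => (t i)%:R * v ^+ i - (t' i)%:R * v ^+ i)); last first.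
      by move=> i _; rewrite mulrBl.
    by rewrite sumrB; move: e; rewrite /Psi => ->; rewrite subrr.
have onto := inj_onto Psi_inj.
have cle : (#|F2| <= #|{ffun 'I_a -> 'I_p}|)%N by rewrite card_ffun !card_ord cF2.
exists (a * p)%N => x.
have [t ->] := onto cle x.
apply: (sumk_pad (m := (\sum_(i < a) t i)%N)).
- exact: (k_gt0 pp a0 c0 pd).
- apply: (@leq_trans (\sum_(i < a) p)%N).
    by apply: leq_sum => i _; apply: ltnW.
  by rewrite big_const_ord iter_addn_0 mulnC.
apply: sumk_big => i _.
have -> : (t i)%:R * v ^+ i = \sum_(j < t i) (w ^+ i) ^+ k.
  by rewrite sumr_const card_ord mulr_natl /v exprAC.
rewrite -[X in sumk _ X _](card_ord (t i)) -sum1_card; apply: sumk_big => j _.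
exact: sumk1.
Qed.

Lemma unit_pow (F : finFieldType) (x : F) : x != 0 -> x ^+ (#|F| - 1)%N = 1.
Proof.
move=> nx; have F1 := finNzRing_gt1 F.
apply: (mulfI nx); rewrite -exprS subn1 (ltn_predK F1) expf_card mulr1 //.
Qed.

Lemma main_B (p b a c : nat) (F1 F2 : finFieldType) :
  prime p -> prime b -> p != b -> (0 < a)%N -> (0 < c)%N ->
  primitive_divisor c p a ->
  (b %| p ^ a - 1)%N -> ~~ (b %| (p ^ a - 1) %/ c)%N ->
  #|F1| = (p ^ (a * b))%N -> #|F2| = (p ^ a)%N ->
  (forall g, is_waring_number F2 ((p ^ a - 1) %/ c)%N g ->
     is_waring_number F1 ((p ^ (a * b) - 1) %/ (b * c))%N (b * g)%N).
Proof.
move=> pp pb pnb a0 c0 pd bdiv bndiv cF1 cF2 g [Hg gmin].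
have pF1 : p \in [pchar F1] := card_finPcharP cF1 pp.
have pF2 : p \in [pchar F2] := card_finPcharP cF2 pp.
have Hc : forall x : F2, x ^+ #|F1| = x.
  move=> x; rewrite cF1 expnM; clear -cF2; elim: b => [|n IH]; first by rewrite expn0 expr1.
  by rewrite expnSr exprM IH -cF2 expf_card.
have [phi _] := embed pF2 pF1 Hc.
have [w pw] := prim_root_exists F2; rewrite cF2 -subn1 in pw.
have [u pu] := prim_root_exists F1; rewrite cF1 -subn1 in pu.
set k := ((p ^ a - 1) %/ c)%N in Hg gmin *.
set K := ((p ^ (a * b) - 1) %/ (b * c))%N.
have k0 : (0 < k)%N by apply: k_gt0.
have K0 : (0 < K)%N by apply: K_gt0.
have q1 : (1 < p ^ a)%N by apply: q_gt1.
have kE : (p ^ a - 1 = k * c)%N by apply: k_eq.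
have KE : (p ^ (a * b) - 1 = K * (b * c))%N by apply: K_eq.
have gE : gcdn (p ^ a - 1) (b * c) = c by apply: gcd_qc.
have cd : (c %| p ^ a - 1)%N by apply: cdiv.
have ph : (b * c).-primitive_root (u ^+ K).
  have bcd : (b * c %| p ^ (a * b) - 1)%N by rewrite [X in (_ %| X)%N]KE dvdn_mull.
  exact: (dvdn_prim_root pu bcd).
set h := u ^+ K in ph.
have phb : c.-primitive_root (h ^+ b).
  by have := dvdn_prim_root ph (dvdn_mull b (dvdnn c)); rewrite mulnK.
have pv : c.-primitive_root (phi (w ^+ k)).
  by rewrite fmorph_primitive_root; exact: (dvdn_prim_root pw cd).
have pz : b.-primitive_root (h ^+ (p ^ a - 1)).
  by have := exp_prim_root ph (p ^ a - 1); rewrite gE mulnK.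
set z := h ^+ (p ^ a - 1) in pz.
have h0 : h != 0.
  by rewrite (prim_root_eq0 ph) muln_eq0 negb_or -!lt0n prime_gt0.
have fixphi x : phi x ^+ (p ^ a) = phi x by rewrite -rmorphXn -cF2 expf_card.
have hq : h ^+ (p ^ a) = h * z.
  by rewrite /z -exprS subn1 (ltn_predK q1).
have zq : z ^+ (p ^ a) = z.
  rewrite -(prim_expr_mod pz (p ^ a)).
  have : (p ^ a == 1 %[mod b])%N by rewrite eqn_mod_dvd ?(ltnW q1).
  by move/eqP => ->; rewrite modn_small ?prime_gt1 ?expr1.
have iterh j : iter j (fun x => x ^+ (p ^ a)) h = h * z ^+ j.
  elim: j => [|j IH] /=; first by rewrite expr0 mulr1.
  by rewrite IH exprMn hq exprAC zq -mulrA -exprS.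
pose Phi (xx : {ffun 'I_b -> F2}) : F1 := \sum_(i < b) phi (xx i) * h ^+ i.
have Phi_inj : injective Phi.
  move=> xx yy e; apply/ffunP => i; apply: (fmorph_inj phi).
  apply/eqP; rewrite -subr_eq0 -rmorphB; apply/eqP; move: i.
  apply: (vdm (r := (p ^ a)%N) (y := h)).
  - by rewrite expn_gt0 prime_gt0.
  - by move=> x y; apply: frobD.
  - by move=> i; apply: fixphi.
  - rewrite map_inj_in_uniq ?iota_uniq // => i j; rewrite !mem_iota /= !add0n => ia ja.
    rewrite !iterh => /(mulfI h0) /eqP; rewrite (eq_prim_root_expr pz) !modn_small //.
    by move/eqP.
  - rewrite (eq_bigr (fun i => phi (xx i) * h ^+ i - phi (yy i) * h ^+ i)); last first.
      by move=> i _; rewrite rmorphB mulrBl.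
    by rewrite sumrB; move: e; rewrite /Phi => ->; rewrite subrr.
have onto := inj_onto Phi_inj.
have cle : (#|F1| <= #|{ffun 'I_b -> F2}|)%N by rewrite card_ffun !card_ord cF1 cF2 expnM.
have M1 (t : F2) (i : nat) : sumk K 1 (phi (t ^+ k) * h ^+ i).
  have [->|nt] := eqVneq t 0.
    rewrite expr0n eqn0Ngt k0 rmorph0 mul0r.
    by have := sumk1 K (0 : F1); rewrite expr0n eqn0Ngt K0.
  have : phi (t ^+ k) ^+ c = 1.
    by rewrite -rmorphXn -exprM -kE -cF2 unit_pow // rmorph1.
  case/(prim_rootP phb) => j ->.
  rewrite -exprM -exprD /h -exprM mulnC exprM.
  exact: sumk1.
have M2 (y : F1) : exists it : 'I_b * F2, y ^+ K = phi (it.2 ^+ k) * h ^+ it.1.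
  have [->|ny] := eqVneq y 0.
    exists (Ordinal (prime_gt0 pb), 0) => /=.
    by rewrite !expr0n !eqn0Ngt K0 k0 /= (rmorph0 phi) mul0r.
  have := unit_pow ny; rewrite cF1; case/(prim_rootP pu) => m ->.
  rewrite exprAC -/h (divn_eq m b) exprD mulnC exprM.
  have : (h ^+ b) ^+ (m %/ b) ^+ c = 1 by rewrite exprAC (prim_expr_order phb) expr1n.
  case/(prim_rootP pv) => l ->.
  exists (Ordinal (ltn_pmod m (prime_gt0 pb)), w ^+ l) => /=.
  by rewrite -rmorphXn exprAC.
split.
  move=> x; change (sumk K (b * g) x).
  have [xx ->] := onto cle x.
  rewrite (_ : (b * g = \sum_(i < b) g)%N); last by rewrite big_const_ord iter_addn_0 mulnC.
  apply: sumk_big => i _.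
  have [ts ->] := Hg (xx i).
  rewrite rmorph_sum mulr_suml.
  rewrite -[X in sumk _ X _](card_ord g) -sum1_card; apply: sumk_big => j _.
  exact: M1.
move=> s Hs.
case: (posnP g) => [->|gpos]; first by rewrite muln0.
have nW : ~ waring_sum F2 k g.-1.
  by move=> H; have := gmin _ H; rewrite -ltnS prednK // ltnn.
have [x0 nx0] : exists x0 : F2, ~ sumk k g.-1 x0 := not_all_ex_not _ (fun x => sumk k g.-1 x) nW.
pose xx := [ffun _ : 'I_b => x0].
have [ys Hys] := Hs (Phi xx).
have [IT HIT] := fin_all_exists (fun j : 'I_s => M2 (tnth ys j)).
pose yy := [ffun i : 'I_b => \sum_(j < s | (IT j).1 == i) (IT j).2 ^+ k].
have eP : Phi xx = Phi yy.
  rewrite Hys (eq_bigr _ (fun j _ => HIT j)).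
  rewrite (partition_big (fun j => (IT j).1) xpredT) //=.
  apply: eq_bigr => i _; rewrite ffunE rmorph_sum mulr_suml.
  by apply: eq_bigr => j /eqP ->; rewrite rmorphXn.
have exy := Phi_inj _ _ eP.
have cnt (i : 'I_b) : (g <= \sum_(j < s | (IT j).1 == i) 1)%N.
  rewrite leqNgt; apply/negP => lt; apply: nx0.
  have -> : x0 = yy i by rewrite -exy ffunE.
  rewrite ffunE; apply: (sumk_pad (m := (\sum_(j < s | (IT j).1 == i) 1)%N)) => //.
    by rewrite -ltnS prednK.
  by apply: sumk_big => j _; apply: sumk1.
have -> : s = (\sum_(j < s) 1)%N by rewrite big_const_ord iter_addn_0 mul1n.
rewrite (partition_big (fun j => (IT j).1) xpredT) //=.
apply: (@leq_trans (\sum_(i < b) g)%N); first by rewrite big_const_ord iter_addn_0 mulnC.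
by apply: leq_sum => i _; apply: cnt.
Qed.

Local Close Scope ring_scope.

Theorem mainTheorem6 (p b a c : nat) (F1 F2 : finFieldType) :
  prime p -> prime b -> p != b -> (0 < a)%N -> (0 < c)%N ->
  primitive_divisor c p a ->
  (b %| p ^ a - 1)%N -> ~~ (b %| (p ^ a - 1) %/ c)%N ->
  #|F1| = (p ^ (a * b))%N -> #|F2| = (p ^ a)%N ->
  (exists g, is_waring_number F2 ((p ^ a - 1) %/ c) g) /\
  (forall g, is_waring_number F2 ((p ^ a - 1) %/ c) g ->
     is_waring_number F1 ((p ^ (a * b) - 1) %/ (b * c)) (b * g)).
Proof.
move=> pp pb pnb a0 c0 pd bdiv bndiv cF1 cF2; split; last first.
  by apply: main_B.
have [s Hs] := waring_exists pp a0 c0 pd cF2.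
pose P n := if excluded_middle_informative (waring_sum F2 ((p ^ a - 1) %/ c) n) then true else false.
have exP : exists n, P n.
  by exists s; rewrite /P; case: excluded_middle_informative.
case: (ex_minnP exP) => g Pg gmin.
exists g; split.
  by move: Pg; rewrite /P; case: excluded_middle_informative.
move=> s' Hs'; apply: gmin; rewrite /P.
by case: excluded_middle_informative.
Qed.
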